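(* Let $e$ be an edge of $\mathcal{G}$ such that $v=s(e)$ satisfies $0<|s^{-1}(v)|<\infty$. If $\pi(p_A)(h)=0$ for each $A\in\mathcal{G}^0$ and each $h\in B\setminus B_A$, then $\pi(s_e^* )(h)=0$ for each $h\in B\setminus B_e$. Consequently, if $\mathcal{G}$ has no infinite emitters, the hypothesis ''$\pi(s_e^* )(h)=0$ for each edge $e$ and each $h\in B\setminus B_e$'' is implied by the hypothesis ''$\pi(p_A)(h)=0$ for each $A\in\mathcal{G}^0$ and $h\in B\setminus B_A$''.
   Context: Let $\mathcal{G}=(G^0,\mathcal{G}^1,r,s)$ be an ultragraph (sets $G^0$ of vertices and $\mathcal{G}^1$ of edges, $s:\mathcal{G}^1\to G^0$, $r:\mathcal{G}^1\to P(G^0)\setminus\{\emptyset\}$), and let $\mathcal{G}^0$ be the smallest subset of $P(G^0)$ containing all singletons $\{v\}$, all $r(e)$, and closed under finite unions and intersections. Let $R$ be a unital commutative ring and $L_R(\mathcal{G})$ the ultragraph Leavitt path algebra, generated by $\{s_e,s_e^*:e\in\mathcal{G}^1\}\cup\{p_A:A\in\mathcal{G}^0\}$ with relations $p_\emptyset=0$, $p_Ap_B=p_{A\cap B}$, $p_{A\cup B}=p_A+p_B-p_{A\cap B}$; $p_{s(e)}s_e=s_ep_{r(e)}=s_e$, $p_{r(e)}s_e^*=s_e^*p_{s(e)}=s_e^*$; $s_e^*s_f=\delta_{e,f}p_{r(e)}$; and $p_v=\sum_{s(e)=v}s_es_e^*$ whenever $0<|s^{-1}(v)|<\infty$. Let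 $N$ be an $R$-module and $\pi:L_R(\mathcal{G})\to Hom_R(N)$ an $R$-algebra homomorphism. Set $N_e=\pi(s_es_e^* )(N)$ for $e\in\mathcal{G}^1$ and $N_A=\pi(p_A)(N)$ for $A\in\mathcal{G}^0$. Suppose $\pi$ is permutative, i.e. there are bases $B$ of $N$, $B_v$ of $N_v$, $B_{r(e)}$ of $N_{r(e)}$ and $B_e$ of $N_e$ ($v\in G^0$, $e\in\mathcal{G}^1$) with $B_v\subseteq B$, $B_{r(e)}\subseteq B$, $B_v\subseteq B_{r(e)}$ for $v\in r(e)$, $B_e\subseteq B_{s(e)}$, and $\pi(s_e)(B_{r(e)})=B_e$. For $A\in\mathcal{G}^0$ written as $A=\big(\bigcap_{e\in X_1}r(e)\big)\cup\dots\cup\big(\bigcap_{e\in X_n}r(e)\big)\cup F$ with $X_i\subseteq\mathcal{G}^1$ and $F\subseteq G^0$ finite, set $B_A=\big(\bigcap_{e\in X_1}B_{r(e)}\big)\cup\dots\cup\big(\bigcap_{e\in X_n}B_{r(e)}\big)\cup\bigcup_{v\in F}B_v$; this is well defined and is a basis of $N_A$. *)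

(* Defs.v *)
From mathcomp Require Import all_boot all_order all_algebra.
Set Implicit Arguments. Unset Strict Implicit. Unset Printing Implicit Defensive.
Import GRing.Theory.
Local Open Scope ring_scope.

Definition vset (T : Type) := T -> Prop.
Definition vsing (T : Type) (v : T) : vset T := fun w => w = v.
Definition vset0 (T : Type) : vset T := fun _ => False.
Definition vsetU (T : Type) (A B : vset T) : vset T := fun v => A v \/ B v.
Definition vsetI (T : Type) (A B : vset T) : vset T := fun v => A v /\ B v.
Definition vimage (T : Type) (f : T -> T) : vset T := fun x => exists y, x = f y.

(* The ultragraph is (V, E, r, s) with s : E -> V, r : E -> nonempty subsets of V. *)
Inductive G0 (V E : Type) (r : E -> vset V) : vset V -> Prop :=
| G0_sing v : G0 r (vsing v)
| G0_range e : G0 r (r e)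
| G0_union A B : G0 r A -> G0 r B -> G0 r (vsetU A B)
| G0_inter A B : G0 r A -> G0 r B -> G0 r (vsetI A B).

Definition finite_emitter (V E : eqType) (s : E -> V) (v : V) : Prop :=
  exists l : seq E, uniq l /\ forall f, s f = v <-> f \in l.

(* An R-algebra homomorphism pi : L_R(G) -> Hom_R(N) is, by the universal
   property of L_R(G), the same as a family of R-linear endomorphisms
   P A = pi(p_A) (A in G0), S e = pi(s_e), Ss e = pi(s_e^* ) satisfying the
   defining relations of L_R(G). *)
Definition LPA_rep (R : comPzRingType) (V E : eqType) (s : E -> V) (r : E -> vset V)
  (N : lmodType R) (P : vset V -> {linear N -> N}) (S Ss : E -> {linear N -> N}) : Prop :=
  [/\ G0 r (@vset0 V) -> forall x, P (@vset0 V) x = 0,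
      forall A B, G0 r A -> G0 r B -> forall x, P A (P B x) = P (vsetI A B) x,
      forall A B, G0 r A -> G0 r B ->
        forall x, P (vsetU A B) x = P A x + P B x - P (vsetI A B) x
    & [/\ forall e x, P (vsing (s e)) (S e x) = S e x /\ S e (P (r e) x) = S e x,
      forall e x, P (r e) (Ss e x) = Ss e x /\ Ss e (P (vsing (s e)) x) = Ss e x,
      forall e f x, Ss e (S f x) = (if e == f then P (r e) x else 0)
    & forall v (l : seq E), uniq l -> (forall f, s f = v <-> f \in l) -> l != [::] ->
        forall x, P (vsing v) x = \sum_(f <- l) S f (Ss f x) ] ].

Definition is_basis_of (R : comPzRingType) (N : lmodType R) (M Bs : vset N) : Prop :=
  [/\ forall b, Bs b -> M b,
      forall x, M x -> exists (l : seq N) (c : N -> R),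
          (forall b, b \in l -> Bs b) /\ x = \sum_(b <- l) c b *: b
    & forall (l : seq N) (c : N -> R), uniq l -> (forall b, b \in l -> Bs b) ->
          \sum_(b <- l) c b *: b = 0 -> forall b, b \in l -> c b = 0 ].

(* pi is permutative with respect to the bases Bfull (of N), Bv v (of N_v),
   Br e (of N_{r(e)}), Be e (of N_e). *)
Definition permutative (R : comPzRingType) (V E : eqType) (s : E -> V) (r : E -> vset V)
  (N : lmodType R) (P : vset V -> {linear N -> N}) (S Ss : E -> {linear N -> N})
  (Bfull : vset N) (Bv : V -> vset N) (Br Be : E -> vset N) : Prop :=
  [/\ is_basis_of (fun _ => True) Bfull,
      forall v, is_basis_of (vimage (P (vsing v))) (Bv v),
      forall e, is_basis_of (vimage (P (r e))) (Br e),
      forall e, is_basis_of (vimage (fun x => S e (Ss e x))) (Be e)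
    & [/\ (forall v h, Bv v h -> Bfull h) /\ (forall e h, Br e h -> Bfull h),
      forall e v, r e v -> forall h, Bv v h -> Br e h,
      forall e h, Be e h -> Bv (s e) h
      & forall e h, Be e h <-> exists g, Br e g /\ h = S e g ] ].

Definition represents (V E : eqType) (r : E -> vset V) (A : vset V)
  (Xs : seq (seq E)) (F : seq V) : Prop :=
  (forall X, X \in Xs -> X != [::]) /\
  forall v, A v <-> ((exists2 X, X \in Xs & forall e, e \in X -> r e v) \/ v \in F).

(* B_A = (cap_{e in X_1} B_{r e}) u ... u (cap_{e in X_n} B_{r e}) u (cup_{v in F} B_v),
   computed from any representation of A (the paper asserts independence of the
   representation; we take h in B_A iff it lies in the set for every representation). *)
Definition BA (V E : eqType) (r : E -> vset V) (N : Type)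
  (Bv : V -> vset N) (Br : E -> vset N) (A : vset V) : vset N :=
  fun h => forall Xs F, represents r A Xs F ->
    (exists2 X, X \in Xs & forall e, e \in X -> Br e h) \/
    (exists2 v, v \in F & Bv v h).

(* Main.v *)
Require Import Defs.
From mathcomp Require Import all_boot all_order all_algebra.
From Stdlib Require Import Classical FunctionalExtensionality PropExtensionality.
Import GRing.Theory.
Local Open Scope ring_scope.

Definition spanP (R : comPzRingType) (N : lmodType R) (Q : N -> Prop) (x : N) :=
  exists lp : seq (R * N), (forall p, p \in lp -> Q p.2) /\ x = \sum_(p <- lp) p.1 *: p.2.

Lemma big_pred1_seq (M : nmodType) (I : eqType) (r : seq I) (i : I) (F : I -> M) :
  uniq r -> \sum_(j <- r | j == i) F j = (if i \in r then F i else 0).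
Proof.
move=> ur; case: ifP => ir.
  by rewrite -big_filter (filter_pred1_uniq ur ir) big_seq1.
by apply: big1_seq => j /andP [/eqP -> ji]; rewrite ji in ir.
Qed.

Lemma regroup (R : comPzRingType) (N : lmodType R) (U : seq N) (l : seq (R * N)) :
  uniq U -> (forall p, p \in l -> p.2 \in U) ->
  \sum_(p <- l) p.1 *: p.2 = \sum_(b <- U) (\sum_(p <- l | p.2 == b) p.1) *: b.
Proof.
move=> uU lU.
transitivity (\sum_(b <- U) \sum_(p <- l) (if p.2 == b then p.1 *: p.2 else 0)).
  rewrite exchange_big /=. apply: eq_big_seq => p pl.
  rewrite -big_mkcond /=.
  rewrite (eq_bigl (fun b => b == p.2)); last by move=> b; rewrite eq_sym.
  by rewrite big_pred1_seq // lU.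
apply: eq_bigr => b _. rewrite scaler_suml [RHS]big_mkcond /=.
apply: eq_bigr => p _. by case: eqP => // ->.
Qed.

Lemma sum_pred1h (R : comPzRingType) (N : lmodType R) (U : seq N) h :
  uniq U -> h \in U -> \sum_(b <- U) ((b == h)%:R : R) *: b = h.
Proof.
move=> uU hU.
rewrite (eq_bigr (fun b => if b == h then b else 0)); last first.
  by move=> b _; case: eqP => _ /=; rewrite ?mulr1n ?mulr0n ?scale1r ?scale0r.
by rewrite -big_mkcond big_pred1_seq // hU.
Qed.

Lemma keyK (R : comPzRingType) (N : lmodType R) (Bs Q1 Q2 : N -> Prop) (h : N)
  (l1 l2 : seq (R * N)) :
  (forall (l : seq N) (c : N -> R), uniq l -> (forall b, b \in l -> Bs b) ->
     \sum_(b <- l) c b *: b = 0 -> forall b, b \in l -> c b = 0) ->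
  Bs h -> ~ Q1 h -> (forall b, Q1 b -> Bs b) -> (forall b, Q2 b -> Bs b) ->
  (forall b, Q1 b -> Q2 b -> b = 0) ->
  (forall p, p \in l1 -> Q1 p.2) -> (forall p, p \in l2 -> Q2 p.2) ->
  h = \sum_(p <- l1) p.1 *: p.2 + \sum_(p <- l2) p.1 *: p.2 ->
  \sum_(p <- l1) p.1 *: p.2 = 0.
Proof.
move=> ind Bh nQ1 Q1B Q2B Q12 H1 H2 Eh.
set U := undup (h :: map snd l1 ++ map snd l2).
have uU : uniq U := undup_uniq _.
have inU1 : forall p, p \in l1 -> p.2 \in U.
  by move=> p pl; rewrite mem_undup inE mem_cat (map_f snd pl) orbT.
have inU2 : forall p, p \in l2 -> p.2 \in U.
  by move=> p pl; rewrite mem_undup inE mem_cat (map_f snd pl) !orbT.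
have hU : h \in U by rewrite mem_undup inE eqxx.
have UB : forall b, b \in U -> Bs b.
  move=> b; rewrite mem_undup inE mem_cat => /orP [/eqP -> // | /orP [] /mapP [p pl ->]].
    by apply: Q1B; apply: H1.
  by apply: Q2B; apply: H2.
pose k b := ((b == h)%:R : R) - \sum_(p <- l1 | p.2 == b) p.1 - \sum_(p <- l2 | p.2 == b) p.1.
have Ek : \sum_(b <- U) k b *: b = 0.
  rewrite /k. under eq_bigr => b _ do rewrite !scalerBl.
  rewrite !sumrB sum_pred1h // -!regroup //.
  rewrite {1}Eh; have gen : forall (M : zmodType) (a b : M), a + b - a - b = 0 by move=> M a b; rewrite addrAC addrK subrr.
  exact: gen.
have k0 := ind U k uU UB Ek.
rewrite (@regroup _ _ _ _ uU inU1). apply: big1_seq => b /andP [_ bU].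
case: (boolP (b \in map snd l1)) => [b1 | nb1].
  case: (boolP (b \in map snd l2)) => [b2 | nb2].
    have q1 : Q1 b by case/mapP: b1 => p pl ->; apply: H1.
    have q2 : Q2 b by case/mapP: b2 => p pl ->; apply: H2.
    by rewrite (Q12 b q1 q2) scaler0.
  have C2b : \sum_(p <- l2 | p.2 == b) p.1 = 0.
    apply: big1_seq => p /andP [/eqP pb pl]; case/negP: nb2; rewrite -pb; exact: map_f.
  have hb : (b == h) = false.
    apply/negbTE/eqP => ebh; apply: nQ1; rewrite -ebh.
    by case/mapP: b1 => p pl ->; apply: H1.
  have := k0 b bU; rewrite /k C2b hb subr0 /= mulr0n sub0r => /eqP.
  by rewrite oppr_eq0 => /eqP ->; rewrite scale0r.
have C1b : \sum_(p <- l1 | p.2 == b) p.1 = 0.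
  apply: big1_seq => p /andP [/eqP pb pl]; case/negP: nb1; rewrite -pb; exact: map_f.
by rewrite C1b scale0r.
Qed.

Theorem mainTheorem9 (R : comPzRingType) (V E : eqType) (s : E -> V) (r : E -> vset V)
  (N : lmodType R) (P : vset V -> {linear N -> N}) (S Ss : E -> {linear N -> N})
  (Bfull : vset N) (Bv : V -> vset N) (Br Be : E -> vset N) :
  (forall e, exists v, r e v) ->
  LPA_rep s r P S Ss ->
  permutative s r P S Ss Bfull Bv Br Be ->
  (forall e, finite_emitter s (s e) ->
     (forall A, G0 r A -> forall h, Bfull h -> ~ BA r Bv Br A h -> P A h = 0) ->
     forall h, Bfull h -> ~ Be e h -> Ss e h = 0)
  /\
  ((forall v, finite_emitter s v) ->
     (forall A, G0 r A -> forall h, Bfull h -> ~ BA r Bv Br A h -> P A h = 0) ->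
     forall e h, Bfull h -> ~ Be e h -> Ss e h = 0).
Proof.
move=> _ [P0 PI PU [HS HSs HSsS HPv]] [BfB BvB BrB BeB [[BvF BrF] Brv Bev BeS]].
have part1 : forall e, finite_emitter s (s e) ->
     (forall A, G0 r A -> forall h, Bfull h -> ~ BA r Bv Br A h -> P A h = 0) ->
     forall h, Bfull h -> ~ Be e h -> Ss e h = 0.
  move=> e [l [ul hl]] H h Bh nBe.
  have el : e \in l by apply/(hl e).
  have lnn : l != [::] by case: l {ul hl} el.
  case: (classic (Bv (s e) h)) => [Bvh | nBvh]; last first.
    have Pv0 : P (vsing (s e)) h = 0.
      apply: H => //; first exact: G0_sing.
      move=> hBA. have := hBA [::] [:: s e]. case.
      - split => [X|w]; first by rewrite in_nil.
        rewrite inE /vsing; split => [->|]; first by right.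
        by case => [[X]|/eqP //]; rewrite in_nil.
      - by case=> X; rewrite in_nil.
      - by case=> w; rewrite inE => /eqP ->.
    by rewrite -(HSs e h).2 Pv0 raddf0.
  have Ph : P (vsing (s e)) h = h.
    have [BvS _ _] := BvB (s e). case: (BvS h Bvh) => y ->.
    rewrite PI; try exact: G0_sing. congr (P _ y).
    apply: functional_extensionality => w; apply: propositional_extensionality.
    rewrite /vsetI; tauto.
  have Hsum := HPv (s e) l ul hl lnn h. rewrite Ph (bigD1_seq e) //= in Hsum.
  have [_ spe _] := BeB e.
  have [lst [c [lstB Elst]]] := spe (S e (Ss e h)) (ex_intro _ h erefl).
  have [l2 [Hl2 El2]] : @spanP R N (fun b => Bfull b /\ S e (Ss e b) = 0)
                           (\sum_(f <- l | f != e) S f (Ss f h)).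
    apply: (big_ind (@spanP R N _)).
    - by exists [::]; split => //; rewrite big_nil.
    - move=> x y [lx [Hx ->]] [ly [Hy ->]]; exists (lx ++ ly); split; last by rewrite big_cat.
      by move=> p; rewrite mem_cat => /orP []; auto.
    - move=> f nfe. have [_ spf _] := BeB f.
      have [lst' [c' [B' E']]] := spf (S f (Ss f h)) (ex_intro _ h erefl).
      exists (map (fun b => (c' b, b)) lst'); split; last by rewrite big_map.
      move=> p /mapP [b bl ->] /=. have Bfb := B' b bl. split.
        by apply: (BvF (s f)); apply: Bev.
      have [g [_ ->]] := (BeS f b).1 Bfb.
      by rewrite HSsS eq_sym (negbTE nfe) raddf0.
  have qe0 : S e (Ss e h) = 0.
    have := @keyK R N Bfull (Be e) (fun b => Bfull b /\ S e (Ss e b) = 0) h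
      (map (fun b => (c b, b)) lst) l2 (match BfB with And3 _ _ x => x end) Bh nBe.
    rewrite big_map -Elst; apply.
    - by move=> b Bb; apply: (BvF (s e)); apply: Bev.
    - by move=> b [].
    - move=> b Bb [_ E0]. have [g [_ Eb]] := (BeS e b).1 Bb.
      by rewrite Eb in E0 *; rewrite HSsS eqxx (HS e g).2 in E0.
    - by move=> p /mapP [b bl ->]; apply: lstB.
    - exact: Hl2.
    - by rewrite -El2.
  rewrite -(HSs e h).1. have := HSsS e e (Ss e h); rewrite eqxx => <-.
  by rewrite qe0 raddf0.
split => //. move=> FE H e h; exact: part1.
Qed.
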